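(* Assume Case (III) holds with $\mathrm{rank}(\mathbf H)=m$, and let $\mathbf y^\star$ be the unique least squares solution of $\mathbf z=\mathbf H\mathbf y$. Suppose $\mathrm G_{\sigma(t)}\equiv\mathrm G^S$ is the fixed complete digraph on $\mathrm V$ (all ordered pairs of distinct nodes are arcs) and $a_{ij}(t)\equiv a^S>0$ for all $i,j$. Then for every initial value $\mathbf x(0)\in\mathcal A_1\times\cdots\times\mathcal A_N$, along the ''projection consensus'' flow, $\lim_{t\to\infty}\frac1N\sum_{i=1}^N\mathbf x_i(t)=\mathbf y^\star$.
   Context: Setting: $N,m\ge1$; $\mathbf H\in\mathbb R^{N\times m}$ has rows $\mathbf h_1^T,\dots,\mathbf h_N^T$ with $\|\mathbf h_i\|=1$; $\mathbf z=(z_1,\dots,z_N)^T$. $\mathcal A_i=\{\mathbf y\in\mathbb R^m:\mathbf h_i^T\mathbf y=z_i\}$, $\mathcal P_{\mathcal A_i}(\mathbf y)=(I-\mathbf h_i\mathbf h_i^T)\mathbf y+z_i\mathbf h_i$ its Euclidean projection. Case (III): $\mathbf z$ is not in the column space of $\mathbf H$; least squares solution $\mathbf y^\star=(\mathbf H^T\mathbf H)^{-1}\mathbf H^T\mathbf z$. $\mathrm V=\{1,\dots,N\}$, $\mathrm N_i=\mathrm V\setminus\{i\}$ for the complete graph. The ''projection consensus'' flow is $\dot{\mathbf x}_i=\sum_{j\in\mathrm N_i}a_{ij}\big(\mathcal P_{\mathcal A_i}(\mathbf x_j)-\mathcal P_{\mathcal A_i}(\mathbf x_i)\big)$, $i\in\mathrm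 V$, $\mathbf x_i(t)\in\mathbb R^m$. *)

(* Defs.v *)
From Stdlib Require Import Reals.
Open Scope R_scope.

(* Vectors in R^m are functions nat -> R (only indices < m matter).
   The matrix H in R^{N x m} is H : nat -> nat -> R, row i being H i. *)

Fixpoint fsum (n : nat) (f : nat -> R) : R :=
  match n with
  | O => 0
  | S n' => fsum n' f + f n'
  end.

Definition dot (m : nat) (u v : nat -> R) : R := fsum m (fun k => u k * v k).

Definition matvec (m : nat) (H : nat -> nat -> R) (y : nat -> R) (i : nat) : R :=
  dot m (H i) y.

Definition full_col_rank (N m : nat) (H : nat -> nat -> R) : Prop :=
  forall y : nat -> R,
    (forall i, (i < N)%nat -> matvec m H y i = 0) ->
    forall k, (k < m)%nat -> y k = 0.

Definition not_in_col_space (N m : nat) (H : nat -> nat -> R) (z : nat -> R) : Prop :=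
  ~ exists y : nat -> R, forall i, (i < N)%nat -> matvec m H y i = z i.

Definition residual2 (N m : nat) (H : nat -> nat -> R) (z y : nat -> R) : R :=
  fsum N (fun i => (z i - matvec m H y i) ^ 2).

Definition least_squares_sol (N m : nat) (H : nat -> nat -> R) (z y : nat -> R) : Prop :=
  forall y', residual2 N m H z y <= residual2 N m H z y'.

(* Euclidean projection onto A_i = {y | h_i^T y = z_i}:
   P_{A_i}(y) = (I - h_i h_i^T) y + z_i h_i *)
Definition projA (m : nat) (H : nat -> nat -> R) (z : nat -> R) (i : nat)
  (y : nat -> R) : nat -> R :=
  fun k => y k - H i k * dot m (H i) y + z i * H i k.

(* right-hand side of the projection consensus flow on the complete graph,
   N_i = V \ {i}, with arc weights a i j:
   sum_{j in N_i} a_ij (P_{A_i}(x_j) - P_{A_i}(x_i)), coordinate k *)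
Definition pc_rhs (N m : nat) (H : nat -> nat -> R) (z : nat -> R)
  (a : nat -> nat -> R) (x : nat -> nat -> R) (i k : nat) : R :=
  fsum N (fun j => if Nat.eq_dec j i then 0
                   else a i j * (projA m H z i (x j) k - projA m H z i (x i) k)).

Definition tends_at_infty (f : R -> R) (l : R) : Prop :=
  forall eps, 0 < eps -> exists T, forall t, T <= t -> Rabs (f t - l) < eps.

(* Main.v *)
Require Import Defs.
From Stdlib Require Import Reals Lra Lia Psatz FunctionalExtensionality.
Open Scope R_scope.
Module MCInv.
From HB Require Import structures.
From mathcomp Require Import all_boot all_algebra.
From mathcomp Require Import Rstruct.
Import GRing.Theory.
Local Open Scope ring_scope.

Lemma fsum_big (n : nat) (f : nat -> R) : fsum n f = (\sum_(j < n) f j)%R.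
Proof.
elim: n => [|n IH]; first by rewrite big_ord0.
by rewrite big_ord_recr /= IH.
Qed.

Lemma inv_exists (m : nat) (A : nat -> nat -> R) :
  (forall v : nat -> R, (forall l, (l < m)%coq_nat -> fsum m (fun j => A l j * v j) = 0) ->
      forall k, (k < m)%coq_nat -> v k = 0) ->
  exists B : nat -> nat -> R, forall (v : nat -> R) k, (k < m)%coq_nat ->
    v k = fsum m (fun l => B k l * fsum m (fun j => A l j * v j)).
Proof.
move=> Hinj.
pose M : 'M[R]_m := \matrix_(i < m, j < m) A i j.
have Hcol : forall cv : 'cV[R]_m, (M *m cv = 0)%R -> cv = 0%R.
  move=> cv Hc.
  pose v := fun j : nat => if (j < m)%N =P true is ReflectT Hj then cv (Ordinal Hj) ord0 else 0%R.
  have Hv : forall j : 'I_m, v j = cv j ord0.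
    move=> j; rewrite /v; case: eqP => [Hj|]; last by rewrite ltn_ord.
    by congr (cv _ _); apply: val_inj.
  have H0 := Hinj v.
  apply/matrixP => i j0; rewrite (ord1 j0) mxE.
  rewrite -Hv; apply: H0; last by apply/ltP; exact: ltn_ord.
  move=> l /ltP Hl.
  have := congr1 (fun X : 'M[R]_(m,1) => X (Ordinal Hl) ord0) Hc.
  rewrite !mxE => <-; rewrite fsum_big.
  by apply: eq_bigr => j _; rewrite !mxE Hv.
have HU : M \in unitmx.
  rewrite -unitmx_tr -row_free_unit -kermx_eq0; apply/eqP.
  apply/row_matrixP => i; rewrite row0.
  have Hk : (row i (kermx M^T) *m M^T = 0)%R.
    by apply/sub_kermxP; exact: row_sub.
  have H2 : (M *m (row i (kermx M^T))^T = 0)%R.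
    by apply: trmx_inj; rewrite trmx_mul trmxK trmx0.
  have := Hcol _ H2.
  by move/(congr1 trmx); rewrite trmxK trmx0.
pose B := fun k l : nat =>
  if (k < m)%N =P true is ReflectT Hk then
    if (l < m)%N =P true is ReflectT Hl then invmx M (Ordinal Hk) (Ordinal Hl) else 0%R
  else 0%R.
exists B => v k /ltP Hk.
pose cv : 'cV[R]_m := \col_(j < m) v j.
have := congr1 (fun X : 'M[R]_(m,1) => X (Ordinal Hk) ord0) (mulKmx HU cv).
rewrite !mxE => <-; rewrite fsum_big.
apply: eq_bigr => l _; rewrite !mxE fsum_big.
rewrite /B; case: eqP => [Hk'|]; last by rewrite Hk.
case: eqP => [Hl'|]; last by rewrite ltn_ord.
congr (_ * _)%R.
  by congr (invmx M _ _); apply: val_inj.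
by apply: eq_bigr => j _; rewrite !mxE.
Qed.
End MCInv.
Global Set Bullet Behavior "Strict Subproofs".

Lemma fsum_ext n f g : (forall j, (j < n)%nat -> f j = g j) -> fsum n f = fsum n g.
Proof. induction n; simpl; intros; [reflexivity|]. rewrite IHn by (intros; apply H; lia). rewrite H by lia. reflexivity. Qed.

Lemma fsum_plus n f g : fsum n (fun j => f j + g j) = fsum n f + fsum n g.
Proof. induction n; simpl; [ring|]. rewrite IHn. ring. Qed.

Lemma fsum_minus n f g : fsum n (fun j => f j - g j) = fsum n f - fsum n g.
Proof. induction n; simpl; [ring|]. rewrite IHn. ring. Qed.

Lemma fsum_scal n c f : fsum n (fun j => c * f j) = c * fsum n f.
Proof. induction n; simpl; [ring|]. rewrite IHn. ring. Qed.

Lemma fsum_scalr n c f : fsum n (fun j => f j * c) = fsum n f * c.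
Proof. induction n; simpl; [ring|]. rewrite IHn. ring. Qed.

Lemma fsum_zero n : fsum n (fun _ => 0) = 0.
Proof. induction n; simpl; [ring|]. rewrite IHn. ring. Qed.

Lemma fsum_const n c : fsum n (fun _ => c) = INR n * c.
Proof. induction n; simpl fsum; [simpl; ring|]. rewrite IHn, S_INR. ring. Qed.

Lemma fsum_swap n m (f : nat -> nat -> R) :
  fsum n (fun i => fsum m (fun j => f i j)) = fsum m (fun j => fsum n (fun i => f i j)).
Proof.
induction n; simpl.
- symmetry; apply fsum_zero.
- rewrite IHn, <- fsum_plus. reflexivity.
Qed.

Lemma fsum_nonneg n f : (forall j, (j < n)%nat -> 0 <= f j) -> 0 <= fsum n f.
Proof. induction n; simpl; intros; [lra|]. assert (0 <= fsum n f) by (apply IHn; intros; apply H; lia).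
 assert (0 <= f n) by (apply H; lia). lra. Qed.

Lemma fsum_le n f g : (forall j, (j < n)%nat -> f j <= g j) -> fsum n f <= fsum n g.
Proof. induction n; simpl; intros; [lra|]. assert (fsum n f <= fsum n g) by (apply IHn; intros; apply H; lia).
 assert (f n <= g n) by (apply H; lia). lra. Qed.

Lemma fsum_eq0 n f : (forall j, (j < n)%nat -> 0 <= f j) -> fsum n f = 0 ->
  forall j, (j < n)%nat -> f j = 0.
Proof.
induction n; simpl; intros Hp Hs j Hj; [lia|].
assert (0 <= fsum n f) by (apply fsum_nonneg; intros; apply Hp; lia).
assert (0 <= f n) by (apply Hp; lia).
destruct (Nat.eq_dec j n) as [->|]; [lra|].
apply IHn; [intros; apply Hp; lia|lra|lia].
Qed.

Lemma fsum_delta n k f : (k < n)%nat ->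
  fsum n (fun j => f j * (if Nat.eqb j k then 1 else 0)) = f k.
Proof.
induction n; intros Hk; [lia|]. simpl.
destruct (Nat.eq_dec k n) as [->|Hne].
- rewrite Nat.eqb_refl.
  rewrite (fsum_ext n _ (fun _ => 0)), fsum_zero; [ring|].
  intros j Hj. destruct (Nat.eqb_spec j n); [lia|ring].
- destruct (Nat.eqb_spec n k); [lia|]. rewrite IHn by lia. ring.
Qed.

Lemma fsum_sq_mean n (a : nat -> R) : (1 <= n)%nat ->
  fsum n (fun j => a j ^ 2) =
  fsum n (fun j => (a j - / INR n * fsum n a) ^ 2) + / INR n * (fsum n a) ^ 2.
Proof.
intros Hn. assert (HN : INR n <> 0) by (apply not_0_INR; lia).
set (c := / INR n * fsum n a).
rewrite (fsum_ext n (fun j => (a j - c)^2) (fun j => a j ^2 + (-2*c) * a j + c^2)) by (intros; ring).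
rewrite !fsum_plus, fsum_scal, fsum_const. unfold c. field. auto.
Qed.

Lemma fsum_cs n (a : nat -> R) : (fsum n a) ^ 2 <= INR n * fsum n (fun j => a j ^ 2).
Proof.
destruct n as [|n]. { simpl. lra. }
rewrite (fsum_sq_mean (S n)) by lia.
assert (0 <= fsum (S n) (fun j => (a j - / INR (S n) * fsum (S n) a) ^ 2))
  by (apply fsum_nonneg; intros; apply pow2_ge_0).
assert (0 < INR (S n)) by (apply lt_0_INR; lia).
rewrite Rmult_plus_distr_l.
replace (INR (S n) * (/ INR (S n) * fsum (S n) a ^ 2)) with (fsum (S n) a ^ 2) by (field; lra).
nra.
Qed.

Lemma dl_plus f g t lf lg : derivable_pt_lim f t lf -> derivable_pt_lim g t lg ->
  derivable_pt_lim (fun s => f s + g s) t (lf + lg).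
Proof. intros. exact (derivable_pt_lim_plus _ _ _ _ _ H H0). Qed.
Lemma dl_minus f g t lf lg : derivable_pt_lim f t lf -> derivable_pt_lim g t lg ->
  derivable_pt_lim (fun s => f s - g s) t (lf - lg).
Proof. intros. exact (derivable_pt_lim_minus _ _ _ _ _ H H0). Qed.
Lemma dl_mult f g t lf lg : derivable_pt_lim f t lf -> derivable_pt_lim g t lg ->
  derivable_pt_lim (fun s => f s * g s) t (lf * g t + f t * lg).
Proof. intros. exact (derivable_pt_lim_mult _ _ _ _ _ H H0). Qed.
Lemma dl_const c t : derivable_pt_lim (fun _ => c) t 0.
Proof. exact (derivable_pt_lim_const c t). Qed.
Lemma dl_scal c f t l : derivable_pt_lim f t l -> derivable_pt_lim (fun s => c * f s) t (c * l).
Proof. intros. replace (c * l) with (0 * f t + c * l) by ring. apply dl_mult; auto. apply dl_const. Qed.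
Lemma dl_sq f t l : derivable_pt_lim f t l -> derivable_pt_lim (fun s => f s ^ 2) t (2 * f t * l).
Proof.
intros. replace (fun s => f s ^ 2) with (fun s => f s * f s) by (extensionality s; ring).
replace (2 * f t * l) with (l * f t + f t * l) by ring. apply dl_mult; auto.
Qed.
Lemma dl_fsum n (F : nat -> R -> R) (F' : nat -> R) t :
  (forall j, (j < n)%nat -> derivable_pt_lim (F j) t (F' j)) ->
  derivable_pt_lim (fun s => fsum n (fun j => F j s)) t (fsum n F').
Proof.
induction n; intros HF; simpl.
- apply dl_const.
- apply dl_plus; [apply IHn; intros; apply HF; lia| apply HF; lia].
Qed.
Open Scope R_scope.

Definition ybar N (x : nat -> nat -> R) k := / INR N * fsum N (fun j => x j k).
Definition ee N (x : nat -> nat -> R) i k := x i k - ybar N x k.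
Definition pp N m (H : nat -> nat -> R) x i := dot m (H i) (ee N x i).
Definition uu N m H x i k := ee N x i k - H i k * pp N m H x i.
Definition VV N m x := fsum N (fun i => fsum m (fun k => ee N x i k ^ 2)).
Definition WW N m H x := fsum N (fun i => fsum m (fun k => uu N m H x i k ^ 2)).

Section Deriv.
Variables (N m : nat) (H : nat -> nat -> R) (X : R -> nat -> nat -> R) (D : nat -> nat -> R) (t : R).
Hypothesis Hd : forall i k, (i < N)%nat -> (k < m)%nat ->
  derivable_pt_lim (fun s => X s i k) t (D i k).

Lemma d_ybar k : (k < m)%nat -> derivable_pt_lim (fun s => ybar N (X s) k) t (ybar N D k).
Proof. intros. unfold ybar. apply dl_scal. apply (dl_fsum N (fun j s => X s j k)). intros; apply Hd; auto. Qed.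

Lemma d_ee i k : (i < N)%nat -> (k < m)%nat ->
  derivable_pt_lim (fun s => ee N (X s) i k) t (ee N D i k).
Proof. intros. unfold ee. apply dl_minus; [apply Hd; auto| apply d_ybar; auto]. Qed.

Lemma d_pp i : (i < N)%nat -> derivable_pt_lim (fun s => pp N m H (X s) i) t (pp N m H D i).
Proof. intros. unfold pp, dot. apply (dl_fsum m (fun k s => H i k * ee N (X s) i k)).
 intros. apply dl_scal. apply d_ee; auto. Qed.

Lemma d_uu i k : (i < N)%nat -> (k < m)%nat ->
  derivable_pt_lim (fun s => uu N m H (X s) i k) t (uu N m H D i k).
Proof. intros. unfold uu. apply dl_minus; [apply d_ee; auto|apply dl_scal, d_pp; auto]. Qed.

Lemma d_VV : derivable_pt_lim (fun s => VV N m (X s)) t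
  (fsum N (fun i => fsum m (fun k => 2 * ee N (X t) i k * ee N D i k))).
Proof. unfold VV. apply (dl_fsum N (fun i s => fsum m (fun k => ee N (X s) i k ^ 2))).
 intros. apply (dl_fsum m (fun k s => ee N (X s) j k ^ 2)). intros. apply dl_sq, d_ee; auto. Qed.

Lemma d_WW : derivable_pt_lim (fun s => WW N m H (X s)) t
  (fsum N (fun i => fsum m (fun k => 2 * uu N m H (X t) i k * uu N m H D i k))).
Proof. unfold WW. apply (dl_fsum N (fun i s => fsum m (fun k => uu N m H (X s) i k ^ 2))).
 intros. apply (dl_fsum m (fun k s => uu N m H (X s) j k ^ 2)). intros. apply dl_sq, d_uu; auto. Qed.
End Deriv.

Section Alg.
Variables (N m : nat) (H : nat -> nat -> R).
Hypothesis HN : (1 <= N)%nat.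

Lemma INRN_nz : INR N <> 0.
Proof. apply not_0_INR; lia. Qed.

Lemma sum_ee y k : fsum N (fun i => ee N y i k) = 0.
Proof. unfold ee. rewrite fsum_minus, fsum_const. unfold ybar. field. apply INRN_nz. Qed.

Lemma sum_y_ee y k : fsum N (fun i => y i k * ee N y i k) = fsum N (fun i => ee N y i k ^ 2).
Proof.
rewrite (fsum_ext N (fun i => y i k * ee N y i k) (fun i => ee N y i k ^ 2 + ybar N y k * ee N y i k)).
- rewrite fsum_plus, fsum_scal, sum_ee. ring.
- intros. unfold ee. ring.
Qed.

Lemma ee_scal c y i k : ee N (fun i k => c * y i k) i k = c * ee N y i k.
Proof. unfold ee, ybar. rewrite fsum_scal. ring. Qed.
Lemma pp_scal c y i : pp N m H (fun i k => c * y i k) i = c * pp N m H y i.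
Proof. unfold pp, dot. rewrite <- fsum_scal. apply fsum_ext. intros. rewrite ee_scal. ring. Qed.
Lemma uu_scal c y i k : uu N m H (fun i k => c * y i k) i k = c * uu N m H y i k.
Proof. unfold uu. rewrite ee_scal, pp_scal. ring. Qed.

Lemma dot_h_u x i : dot m (H i) (H i) = 1 -> dot m (H i) (uu N m H x i) = 0.
Proof.
intros Hu. unfold dot, uu.
rewrite (fsum_ext m _ (fun k => H i k * ee N x i k + (- pp N m H x i) * (H i k * H i k))) by (intros; ring).
rewrite fsum_plus, fsum_scal. unfold dot in Hu. rewrite Hu. unfold pp, dot. ring.
Qed.

Lemma e_u x i : dot m (H i) (H i) = 1 ->
  fsum m (fun k => ee N x i k * uu N m H x i k) = fsum m (fun k => uu N m H x i k ^ 2).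
Proof.
intros Hu.
rewrite (fsum_ext m (fun k => uu N m H x i k ^ 2)
   (fun k => ee N x i k * uu N m H x i k + (- pp N m H x i) * (H i k * uu N m H x i k)))
  by (intros j _; cbv beta; replace (uu N m H x i j ^ 2) with ((ee N x i j - H i j * pp N m H x i) * uu N m H x i j) by (unfold uu; ring); ring).
rewrite fsum_plus, fsum_scal. change (fsum m (fun k => H i k * uu N m H x i k)) with (dot m (H i) (uu N m H x i)).
rewrite dot_h_u by auto. ring.
Qed.

Lemma pc_rhs_eq z a x i k :
  pc_rhs N m H z (fun _ _ => a) x i k = - (a * INR N) * uu N m H x i k.
Proof.
unfold pc_rhs.
rewrite (fsum_ext N _ (fun j => a * ((x j k - x i k) - H i k * (dot m (H i) (x j) - dot m (H i) (x i))))).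
2:{ intros j Hj. destruct (Nat.eq_dec j i) as [->|]; [ring|]. unfold projA. ring. }
rewrite fsum_scal, fsum_minus, fsum_minus, fsum_scal, fsum_minus, !fsum_const.
unfold uu, pp, ee.
assert (Hd : fsum N (fun j => dot m (H i) (x j)) = INR N * dot m (H i) (ybar N x)).
{ unfold dot, ybar. rewrite fsum_swap. rewrite <- fsum_scal. apply fsum_ext. intros.
  rewrite fsum_scal. field. apply INRN_nz. }
assert (He : dot m (H i) (fun k => x i k - ybar N x k) = dot m (H i) (x i) - dot m (H i) (ybar N x)).
{ unfold dot. rewrite <- fsum_minus. apply fsum_ext. intros. ring. }
rewrite Hd, He. unfold ybar at 2. 
assert (HNz := INRN_nz). field. auto.
Qed.
Hypothesis Hunit : forall i, (i < N)%nat -> dot m (H i) (H i) = 1.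

Lemma VV_deriv_eq x c :
  fsum N (fun i => fsum m (fun k => 2 * ee N x i k * ee N (fun i k => c * uu N m H x i k) i k))
  = 2 * c * WW N m H x.
Proof.
set (u := uu N m H x).
rewrite (fsum_ext N _ (fun i => 2 * c * fsum m (fun k => ee N x i k * u i k)
      - 2 * c * fsum m (fun k => ybar N u k * ee N x i k))).
2:{ intros i Hi. rewrite <- !fsum_scal, <- fsum_minus. apply fsum_ext. intros k Hk.
    rewrite ee_scal. unfold ee at 2. ring. }
rewrite fsum_minus, !fsum_scal.
rewrite (fsum_swap N m (fun i k => ybar N u k * ee N x i k)).
rewrite (fsum_ext m _ (fun _ => 0)) by (intros; rewrite fsum_scal, sum_ee; ring).
rewrite fsum_zero. unfold WW.
rewrite (fsum_ext N _ (fun i => fsum m (fun k => uu N m H x i k ^ 2))) by (intros; apply e_u; auto).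
ring.
Qed.

Lemma WW_deriv_le x c : c <= 0 ->
  fsum N (fun i => fsum m (fun k => 2 * uu N m H x i k * uu N m H (fun i k => c * uu N m H x i k) i k)) <= 0.
Proof.
intros Hc.
set (u := uu N m H x).
rewrite (fsum_ext N _ (fun i => 2 * c * fsum m (fun k => u i k * ee N u i k))).
2:{ intros i Hi.
    rewrite (fsum_ext m _ (fun k => 2 * c * (u i k * ee N u i k) - (2 * c * pp N m H u i) * (H i k * u i k))).
    2:{ intros k Hk. rewrite uu_scal. unfold uu. ring. }
    rewrite fsum_minus, !fsum_scal. change (fsum m (fun k => H i k * u i k)) with (dot m (H i) (u i)).
    unfold u. rewrite dot_h_u by auto. ring. }
rewrite fsum_scal, fsum_swap.
rewrite (fsum_ext m _ (fun k => fsum N (fun i => ee N u i k ^ 2))) by (intros; apply sum_y_ee).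
assert (0 <= fsum m (fun k => fsum N (fun i => ee N u i k ^ 2))).
{ apply fsum_nonneg; intros; apply fsum_nonneg; intros; apply pow2_ge_0. }
nra.
Qed.

End Alg.

Lemma fsum_single_le n f j : (j < n)%nat -> (forall i, (i < n)%nat -> 0 <= f i) -> f j <= fsum n f.
Proof.
induction n; intros Hj Hp; [lia|]. simpl.
destruct (Nat.eq_dec j n) as [->|].
- assert (0 <= fsum n f) by (apply fsum_nonneg; intros; apply Hp; lia). lra.
- assert (f j <= fsum n f) by (apply IHn; [lia|intros; apply Hp; lia]).
  assert (0 <= f n) by (apply Hp; lia). lra.
Qed.

Lemma nonincr_of_deriv (f f' : R -> R) a :
  (forall t, a < t -> derivable_pt_lim f t (f' t)) -> (forall t, a < t -> f' t <= 0) ->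
  forall s t, a < s -> s <= t -> f t <= f s.
Proof.
intros Hd Hn s t Hs Hst. destruct (Rle_lt_or_eq_dec s t Hst) as [Hlt|<-]; [|lra].
destruct (MVT_cor2 f f' s t Hlt) as [c [Hc1 Hc2]].
- intros c Hc. apply Hd. lra.
- assert (f' c <= 0) by (apply Hn; lra). nra.
Qed.

Section Main.
Variables (N m : nat) (H : nat -> nat -> R) (z : nat -> R) (aS : R) (x : R -> nat -> nat -> R).
Hypothesis HN : (1 <= N)%nat.
Hypothesis Hunit : forall i, (i < N)%nat -> dot m (H i) (H i) = 1.
Hypothesis HaS : 0 < aS.
Hypothesis Hode : forall t, 0 < t -> forall i k, (i < N)%nat -> (k < m)%nat ->
     derivable_pt_lim (fun s => x s i k) t
       (pc_rhs N m H z (fun _ _ => aS) (x t) i k).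

Let c := - (aS * INR N).

Lemma cneg : c < 0.
Proof. unfold c. assert (0 < INR N) by (apply lt_0_INR; lia). nra. Qed.

Lemma Hode' t : 0 < t -> forall i k, (i < N)%nat -> (k < m)%nat ->
  derivable_pt_lim (fun s => x s i k) t ((fun i k => c * uu N m H (x t) i k) i k).
Proof. intros. cbv beta. unfold c. rewrite <- (pc_rhs_eq N m H HN z); auto. Qed.

Lemma dV t : 0 < t -> derivable_pt_lim (fun s => VV N m (x s)) t (2 * c * WW N m H (x t)).
Proof.
intros Ht. rewrite <- (VV_deriv_eq N m H HN Hunit).
apply (d_VV N m x (fun i k => c * uu N m H (x t) i k) t). apply Hode'; auto.
Qed.

Definition Wd t := fsum N (fun i => fsum m (fun k => 2 * uu N m H (x t) i k *
   uu N m H (fun i k => c * uu N m H (x t) i k) i k)).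

Lemma dW t : 0 < t -> derivable_pt_lim (fun s => WW N m H (x s)) t (Wd t).
Proof.
intros Ht. apply (d_WW N m H x (fun i k => c * uu N m H (x t) i k) t). apply Hode'; auto.
Qed.

Lemma W_nonincr s t : 0 < s -> s <= t -> WW N m H (x t) <= WW N m H (x s).
Proof.
apply (nonincr_of_deriv (fun s => WW N m H (x s)) Wd 0).
- apply dW.
- intros. apply WW_deriv_le; auto. pose proof cneg; lra.
Qed.

Lemma key_bound T : 1 < T -> 2 * (aS * INR N) * WW N m H (x T) * (T - 1) <= VV N m (x 1).
Proof.
intros HT. set (w := WW N m H (x T)).
assert (Hphi : forall s t, 0 < s -> s <= t -> t <= T ->
  VV N m (x t) - 2 * c * w * t <= VV N m (x s) - 2 * c * w * s).
{ intros s t Hs Hst HtT. destruct (Rle_lt_or_eq_dec s t Hst) as [Hlt|<-]; [|lra].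
  destruct (MVT_cor2 (fun s => VV N m (x s) - 2 * c * w * s)
                     (fun s => 2 * c * WW N m H (x s) - 2 * c * w) s t Hlt) as [r [Hr1 Hr2]].
  - intros r Hr. apply dl_minus. apply dV; lra.
    replace (2 * c * w) with (2 * c * w * 1) at 2 by ring. apply dl_scal, derivable_pt_lim_id.
  - assert (w <= WW N m H (x r)) by (apply W_nonincr; lra).
    pose proof cneg. cbv beta in Hr1.
    assert (0 <= (WW N m H (x r) - w) * (t - s)) by (apply Rmult_le_pos; lra).
    assert (0 <= - c * ((WW N m H (x r) - w) * (t - s))) by (apply Rmult_le_pos; lra).
    nra. }
specialize (Hphi 1 T ltac:(lra) ltac:(lra) ltac:(lra)).
assert (0 <= VV N m (x T)) by (unfold VV; apply fsum_nonneg; intros; apply fsum_nonneg; intros; apply pow2_ge_0).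
unfold c in Hphi. nra.
Qed.

End Main.

Definition C0 (f : R -> R) := forall eps, 0 < eps -> exists delta, 0 < delta /\
  forall t, 0 <= t < delta -> Rabs (f t - f 0) < eps.

Lemma C0_plus f g : C0 f -> C0 g -> C0 (fun t => f t + g t).
Proof.
intros Hf Hg eps He.
destruct (Hf (eps/2) ltac:(lra)) as [d1 [Hd1 H1]].
destruct (Hg (eps/2) ltac:(lra)) as [d2 [Hd2 H2]].
exists (Rmin d1 d2). split. { apply Rmin_pos; auto. }
intros t Ht. assert (t < d1) by (eapply Rlt_le_trans; [apply Ht|apply Rmin_l]).
assert (t < d2) by (eapply Rlt_le_trans; [apply Ht|apply Rmin_r]).
specialize (H1 t ltac:(lra)). specialize (H2 t ltac:(lra)).
replace (f t + g t - (f 0 + g 0)) with ((f t - f 0) + (g t - g 0)) by ring.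
eapply Rle_lt_trans; [apply Rabs_triang|]. lra.
Qed.

Lemma C0_scal a f : C0 f -> C0 (fun t => a * f t).
Proof.
intros Hf eps He.
assert (Ha : 0 < Rabs a + 1) by (pose proof (Rabs_pos a); lra).
destruct (Hf (eps / (Rabs a + 1))) as [d [Hd H1]]. { apply Rdiv_lt_0_compat; auto. }
exists d. split; auto. intros t Ht. specialize (H1 t Ht).
replace (a * f t - a * f 0) with (a * (f t - f 0)) by ring. rewrite Rabs_mult.
assert (Rabs a * Rabs (f t - f 0) <= Rabs a * (eps / (Rabs a + 1))).
{ apply Rmult_le_compat_l; [apply Rabs_pos|lra]. }
assert (Rabs a * (eps / (Rabs a + 1)) < eps).
{ apply (Rmult_lt_reg_r (Rabs a + 1)); auto. field_simplify; lra. }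
lra.
Qed.

Lemma C0_fsum n (F : nat -> R -> R) : (forall j, (j < n)%nat -> C0 (F j)) ->
  C0 (fun t => fsum n (fun j => F j t)).
Proof.
induction n; intros HF; simpl.
- intros eps He. exists 1. split; [lra|]. intros. rewrite Rminus_diag, Rabs_R0. auto.
- apply (C0_plus (fun t => fsum n (fun j => F j t)) (F n)); [apply IHn; intros; apply HF; lia|apply HF; lia].
Qed.

Lemma small_zero a : (forall eps, 0 < eps -> Rabs a < eps) -> a = 0.
Proof.
intros Ha. destruct (Req_dec a 0); auto.
assert (0 < Rabs a) by (apply Rabs_pos_lt; auto). specialize (Ha _ H0). lra.
Qed.

Lemma normal_eq N m H z ystar (Hls : least_squares_sol N m H z ystar) k : (k < m)%nat ->
  fsum N (fun i => H i k * (z i - dot m (H i) ystar)) = 0.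
Proof.
intros Hk.
set (b := fsum N (fun i => H i k * (z i - dot m (H i) ystar))).
set (C := fsum N (fun i => H i k ^ 2)).
set (R0 := residual2 N m H z ystar).
assert (HC : 0 <= C) by (apply fsum_nonneg; intros; apply pow2_ge_0).
assert (Hres : forall e, residual2 N m H z (fun l => ystar l + e * (if Nat.eqb l k then 1 else 0))
                 = R0 - 2 * e * b + e ^ 2 * C).
{ intros e. unfold residual2, R0, residual2, b, C.
  rewrite (fsum_ext N _ (fun i => (z i - matvec m H ystar i) ^ 2 + (- 2 * e) * (H i k * (z i - dot m (H i) ystar))
          + e ^ 2 * (H i k ^ 2))).
  - rewrite !fsum_plus, !fsum_scal. ring.
  - intros i Hi. unfold matvec, dot.
    rewrite (fsum_ext m (fun l => H i l * (ystar l + e * (if Nat.eqb l k then 1 else 0)))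
               (fun l => H i l * ystar l + e * (H i l * (if Nat.eqb l k then 1 else 0)))) by (intros; ring).
    rewrite fsum_plus, fsum_scal, fsum_delta by auto. ring. }
specialize (Hls (fun l => ystar l + (b / (C + 1)) * (if Nat.eqb l k then 1 else 0))).
rewrite Hres in Hls. fold R0 in Hls.
assert (Hq : 0 <= - 2 * (b / (C + 1)) * b + (b / (C + 1)) ^ 2 * C) by lra.
replace (- 2 * (b / (C + 1)) * b + (b / (C + 1)) ^ 2 * C) with (- (b ^ 2) * (C + 2) / ((C + 1) ^ 2)) in Hq
  by (field; lra).
assert (0 < (C + 1) ^ 2) by nra.
assert (0 <= - (b ^ 2) * (C + 2)).
{ apply (Rmult_le_reg_r (/ (C + 1) ^ 2)). apply Rinv_0_lt_compat; auto. rewrite Rmult_0_l. exact Hq. }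
nra.
Qed.

Lemma Ainj N m H (Hrank : full_col_rank N m H) (v : nat -> R) :
  (forall l, (l < m)%nat -> fsum m (fun j => fsum N (fun i => H i l * H i j) * v j) = 0) ->
  forall k, (k < m)%nat -> v k = 0.
Proof.
intros Hv. apply Hrank.
assert (Hs : fsum N (fun i => (matvec m H v i) ^ 2) = 0).
{ transitivity (fsum m (fun l => v l * fsum m (fun j => fsum N (fun i => H i l * H i j) * v j))).
  - unfold matvec, dot.
    rewrite (fsum_ext N _ (fun i => fsum m (fun l => v l * (H i l * fsum m (fun j => H i j * v j))))).
    2:{ intros i Hi. transitivity (fsum m (fun l => H i l * v l) * fsum m (fun j => H i j * v j)); [ring|].
        rewrite <- fsum_scalr. apply fsum_ext; intros; ring. }
    rewrite fsum_swap. apply fsum_ext. intros l Hl.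
    rewrite fsum_scal. f_equal.
    rewrite (fsum_ext m (fun j => fsum N (fun i => H i l * H i j) * v j) (fun j => fsum N (fun i => H i l * (H i j * v j))))
      by (intros; rewrite <- fsum_scalr; apply fsum_ext; intros; ring).
    rewrite <- fsum_swap. apply fsum_ext. intros. rewrite fsum_scal. ring.
  - rewrite (fsum_ext m _ (fun _ => 0)) by (intros; rewrite Hv; auto; ring). apply fsum_zero. }
intros i Hi.
assert (matvec m H v i ^ 2 = 0).
{ apply (fsum_eq0 N (fun i => matvec m H v i ^ 2)); auto. intros; apply pow2_ge_0. }
nra.
Qed.

Section Main2.
Variables (N m : nat) (H : nat -> nat -> R) (z : nat -> R) (aS : R) (x : R -> nat -> nat -> R).
Hypothesis HN : (1 <= N)%nat.
Hypothesis Hunit : forall i, (i < N)%nat -> dot m (H i) (H i) = 1.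
Hypothesis HaS : 0 < aS.
Hypothesis Hinit : forall i, (i < N)%nat -> dot m (H i) (x 0 i) = z i.
Hypothesis Hcont0 : forall i k, (i < N)%nat -> (k < m)%nat ->
     forall eps, 0 < eps -> exists delta, 0 < delta /\
       forall t, 0 <= t < delta -> Rabs (x t i k - x 0 i k) < eps.
Hypothesis Hode : forall t, 0 < t -> forall i k, (i < N)%nat -> (k < m)%nat ->
     derivable_pt_lim (fun s => x s i k) t
       (pc_rhs N m H z (fun _ _ => aS) (x t) i k).

Lemma invariance t i : 0 < t -> (i < N)%nat -> dot m (H i) (x t i) = z i.
Proof.
intros Ht Hi.
set (g := fun s => dot m (H i) (x s i)).
assert (Hg : forall r, 0 < r -> derivable_pt_lim g r 0).
{ intros r Hr. unfold g, dot.
  replace 0 with (fsum m (fun k => H i k * (- (aS * INR N) * uu N m H (x r) i k))).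
  - apply (dl_fsum m (fun k s => H i k * x s i k)). intros k Hk. apply dl_scal.
    rewrite <- (pc_rhs_eq N m H HN z). apply Hode; auto.
  - rewrite (fsum_ext m _ (fun k => (- (aS * INR N)) * (H i k * uu N m H (x r) i k))) by (intros; ring).
    rewrite fsum_scal. change (fsum m (fun k => H i k * uu N m H (x r) i k)) with (dot m (H i) (uu N m H (x r) i)).
    rewrite dot_h_u; auto. ring. }
assert (Hconst : forall s, 0 < s -> s <= t -> g t = g s).
{ intros s Hs Hst. apply Rle_antisym.
  - apply (nonincr_of_deriv g (fun _ => 0) 0); [exact Hg|intros; lra|exact Hs|exact Hst].
  - assert (-1 * g t <= -1 * g s); [|lra].
    apply (nonincr_of_deriv (fun s => -1 * g s) (fun _ => 0) 0); [|intros; lra|exact Hs|exact Hst].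
    intros r Hr. replace 0 with (-1 * 0) by ring. apply dl_scal, Hg; auto. }
assert (HC : C0 g).
{ unfold g, dot. apply (C0_fsum m (fun k s => H i k * x s i k)). intros k Hk.
  apply (C0_scal (H i k) (fun s => x s i k)). intros eps He. apply Hcont0; auto. }
rewrite <- (Hinit i Hi).
change (g t = g 0). apply Rminus_diag_uniq, small_zero. intros eps He.
destruct (HC eps He) as [d [Hd Hd']].
set (s := Rmin d t / 2).
assert (0 < Rmin d t) by (apply Rmin_pos; auto).
assert (Rmin d t <= d) by apply Rmin_l. assert (Rmin d t <= t) by apply Rmin_r.
rewrite (Hconst s) by (unfold s; lra). apply Hd'. unfold s; lra.
Qed.

Variable ystar : nat -> R.
Hypothesis Hls : least_squares_sol N m H z ystar.

Lemma U_eq T l : 0 < T -> (l < m)%nat ->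
  fsum N (fun i => uu N m H (x T) i l) =
  fsum m (fun j => fsum N (fun i => H i l * H i j) * (ybar N (x T) j - ystar j)).
Proof.
intros HT Hl.
transitivity (fsum N (fun i => H i l * (dot m (H i) (ybar N (x T)) - z i))
              + fsum N (fun i => H i l * (z i - dot m (H i) ystar))).
- rewrite (normal_eq N m H z ystar Hls l Hl), Rplus_0_r.
  unfold uu. rewrite fsum_minus, (sum_ee N HN). 
  transitivity (-1 * fsum N (fun j => H j l * pp N m H (x T) j)); [ring|].
  rewrite <- fsum_scal. apply fsum_ext. intros i Hi.
  unfold pp, ee.
  assert (Hd : dot m (H i) (fun k => x T i k - ybar N (x T) k) = dot m (H i) (x T i) - dot m (H i) (ybar N (x T))).
  { unfold dot. rewrite <- fsum_minus. apply fsum_ext. intros; ring. }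
  rewrite Hd, invariance by auto. ring.
- rewrite <- fsum_plus.
  rewrite (fsum_ext N _ (fun i => fsum m (fun j => H i l * H i j * (ybar N (x T) j - ystar j)))).
  + rewrite fsum_swap. apply fsum_ext. intros j Hj. rewrite fsum_scalr. reflexivity.
  + intros i Hi. unfold dot.
    transitivity (H i l * (fsum m (fun k => H i k * ybar N (x T) k) - fsum m (fun k => H i k * ystar k))); [ring|].
    rewrite <- fsum_minus, <- fsum_scal. apply fsum_ext. intros; ring.
Qed.

End Main2.

Lemma inv_exists' (m : nat) (A : nat -> nat -> R) :
  (forall v : nat -> R, (forall l, (l < m)%nat -> fsum m (fun j => A l j * v j) = 0) ->
      forall k, (k < m)%nat -> v k = 0) ->
  exists B : nat -> nat -> R, forall (v : nat -> R) k, (k < m)%nat ->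
    v k = fsum m (fun l => B k l * fsum m (fun j => A l j * v j)).
Proof. exact (MCInv.inv_exists m A). Qed.

Theorem theorem8
  (N m : nat) (HN : (1 <= N)%nat) (Hm : (1 <= m)%nat)
  (H : nat -> nat -> R) (z : nat -> R)
  (Hunit : forall i, (i < N)%nat -> dot m (H i) (H i) = 1)
  (HIII : not_in_col_space N m H z)
  (Hrank : full_col_rank N m H)
  (ystar : nat -> R) (Hls : least_squares_sol N m H z ystar)
  (aS : R) (HaS : 0 < aS)
  (x : R -> nat -> nat -> R)
  (Hinit : forall i, (i < N)%nat -> dot m (H i) (x 0 i) = z i)
  (Hcont0 : forall i k, (i < N)%nat -> (k < m)%nat ->
     forall eps, 0 < eps -> exists delta, 0 < delta /\
       forall t, 0 <= t < delta -> Rabs (x t i k - x 0 i k) < eps)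
  (Hode : forall t, 0 < t -> forall i k, (i < N)%nat -> (k < m)%nat ->
     derivable_pt_lim (fun s => x s i k) t
       (pc_rhs N m H z (fun _ _ => aS) (x t) i k)) :
  forall k, (k < m)%nat ->
    tends_at_infty (fun t => / INR N * fsum N (fun i => x t i k)) (ystar k).
Proof.
intros k Hk.
destruct (inv_exists' m (fun l j => fsum N (fun i => H i l * H i j)) (Ainj N m H Hrank)) as [B HB].
set (K := INR m * fsum m (fun l => B k l ^ 2) * INR N).
set (V1 := VV N m (x 1)).
assert (HK : 0 <= K).
{ unfold K. apply Rmult_le_pos; [apply Rmult_le_pos|apply pos_INR]; [apply pos_INR|].
  apply fsum_nonneg; intros; apply pow2_ge_0. }
assert (HV1 : 0 <= V1) by (unfold V1, VV; apply fsum_nonneg; intros; apply fsum_nonneg; intros; apply pow2_ge_0).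
assert (Hbound : forall T, 1 < T -> (ybar N (x T) k - ystar k) ^ 2 <= K * WW N m H (x T)).
{ intros T HT.
  set (W := WW N m H (x T)).
  set (U := fun l => fsum N (fun i => uu N m H (x T) i l)).
  assert (HU : forall l, (l < m)%nat -> U l ^ 2 <= INR N * W).
  { intros l Hl. unfold U. eapply Rle_trans; [apply fsum_cs|].
    apply Rmult_le_compat_l; [apply pos_INR|].
    unfold W, WW. rewrite (fsum_swap N m (fun i k => uu N m H (x T) i k ^ 2)).
    apply (fsum_single_le m (fun k => fsum N (fun i => uu N m H (x T) i k ^ 2))); auto.
    intros; apply fsum_nonneg; intros; apply pow2_ge_0. }
  assert (Hd : ybar N (x T) k - ystar k = fsum m (fun l => B k l * U l)).
  { rewrite (HB (fun j => ybar N (x T) j - ystar j) k Hk). apply fsum_ext. intros l Hl.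
    unfold U. rewrite (U_eq N m H z aS x HN Hunit Hinit Hcont0 Hode ystar Hls T l) by (auto; lra).
    reflexivity. }
  rewrite Hd. eapply Rle_trans; [apply fsum_cs|].
  unfold K. rewrite (Rmult_assoc (INR m)), (Rmult_assoc (INR m)).
  apply Rmult_le_compat_l; [apply pos_INR|].
  rewrite Rmult_assoc, <- fsum_scalr. apply fsum_le. intros l Hl.
  rewrite Rpow_mult_distr. apply Rmult_le_compat_l; [apply pow2_ge_0|]. apply HU; auto. }
intros eps He.
set (a2 := 2 * (aS * INR N)).
assert (Ha2 : 0 < a2) by (unfold a2; assert (0 < INR N) by (apply lt_0_INR; lia); nra).
exists (2 + K * V1 / (a2 * eps ^ 2)).
intros t Ht.
assert (Hq : 0 <= K * V1 / (a2 * eps ^ 2)).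
{ apply Rmult_le_pos; [apply Rmult_le_pos; auto|]. apply Rlt_le, Rinv_0_lt_compat. apply Rmult_lt_0_compat; [auto|apply pow_lt; auto]. }
assert (HT : 1 < t) by lra.
assert (HW : a2 * WW N m H (x t) * (t - 1) <= V1) by (apply (key_bound N m H z aS x); auto).
specialize (Hbound t HT).
change (/ INR N * fsum N (fun i => x t i k)) with (ybar N (x t) k).
set (d := ybar N (x t) k - ystar k) in *.
assert (HW0 : 0 <= WW N m H (x t)) by (unfold WW; apply fsum_nonneg; intros; apply fsum_nonneg; intros; apply pow2_ge_0).
assert (H1 : d ^ 2 * (a2 * (t - 1)) <= K * V1).
{ apply Rle_trans with (K * WW N m H (x t) * (a2 * (t - 1))).
  - apply Rmult_le_compat_r; [nra|auto].
  - replace (K * WW N m H (x t) * (a2 * (t - 1))) with (K * (a2 * WW N m H (x t) * (t - 1))) by ring.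
    apply Rmult_le_compat_l; auto. }
assert (H2 : a2 * eps ^ 2 * (t - 1) >= a2 * eps ^ 2 + K * V1).
{ assert (t - 1 >= 1 + K * V1 / (a2 * eps ^ 2)) by lra.
  assert (0 < a2 * eps ^ 2) by (apply Rmult_lt_0_compat; [auto|apply pow_lt; auto]).
  replace (K * V1) with (a2 * eps ^ 2 * (K * V1 / (a2 * eps ^ 2))) by (field; nra).
  nra. }
destruct (Rlt_or_le (Rabs d) eps) as [|Hc]; auto.
exfalso.
assert (eps ^ 2 <= d ^ 2).
{ rewrite <- (pow2_abs d). apply pow_incr. lra. }
assert (0 < a2 * (t - 1)) by nra.
assert (eps ^ 2 * (a2 * (t - 1)) <= d ^ 2 * (a2 * (t - 1))) by (apply Rmult_le_compat_r; lra).
assert (0 < eps ^ 2) by (apply pow_lt; auto).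
assert (eps ^ 2 * (a2 * (t - 1)) = a2 * eps ^ 2 * (t - 1)) by ring.
assert (0 < a2 * eps ^ 2) by (apply Rmult_lt_0_compat; auto).
lra.
Qed.
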